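(* Let $K$ be an alphabet space and $\sigma:K\to K^+$ a primitive generalized substitution. For every $\mathbf z\in X_\sigma$ and every $k\in\mathbb N$, the sequence $\mathbf z$ is a concatenation of $\sigma^k$-words, and $\mathbf z=S^i\sigma^k(\mathbf y)$ for some $i\ge0$ and some $\mathbf y\in X_\sigma$.
   Context: An alphabet space is a compact zero-dimensional metric space $K$ with at least two points; $K^+$ the nonempty finite words. A generalized substitution is a map $\sigma:K\to K^+$ with $a\mapsto|\sigma(a)|$ continuous and, for each $j$, $a\mapsto$ ($j$-th letter of $\sigma(a)$) continuous on $\{a:|\sigma(a)|\ge j\}$; it is extended to words by concatenation (and iterated) and to $K^{\mathbb Z}$ by concatenating the images with the image of $x_0$ starting at coordinate $0$. $\sigma$ is primitive if for every nonempty open $V\subset K$ there is $j$ such that for all $a$ and $k\ge j$ some letter of $\sigma^k(a)$ is in $V$. $\mathcal L(\sigma)$ is the set of words that are subwords of some $\sigma^j(a)$ or limits in $K^n$ of such words; $X_\sigma=\{\mathbf y\in K^{\mathbb Z}:\mathbf y[-n,n]\in\mathcal L(\sigma)\ \forall n\ge0\}$; $S$ is the shift $S(\mathbf y)_i=y_{i+1}$. A $\sigma^k$-word is a word $\sigma^k(a)$, $a\in K$; $\mathbf z$ is a concatenation of $\sigma^k$-words if there is a strictly increasing bi-infinite sequence of integers $(m_l)_{l\in\mathbb Z}$ with each $\mathbf z[m_l,m_{l+1}-1]$ a $\sigma^k$-word. *)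

(* Defs.v *)
From HB Require Import structures.
From mathcomp Require Import all_boot all_order all_algebra.
From mathcomp Require Import all_classical all_reals all_analysis.
Set Implicit Arguments. Unset Strict Implicit. Unset Printing Implicit Defensive.
Import Order.TTheory GRing.Theory Num.Theory.
Local Open Scope classical_set_scope.
Local Open Scope ring_scope.

Definition clopen_base (T : topologicalType) : Prop :=
  forall (x : T) (U : set T), nbhs x U ->
    exists V : set T, [/\ clopen V, V x & V `<=` U].

Definition alphabet_space {R : realType} (K : metricType R) : Prop :=
  [/\ compact [set: K], clopen_base K & exists a b : K, a != b].

Definition subst_word {K : Type} (sigma : K -> seq K) (w : seq K) : seq K :=
  flatten (map sigma w).

Definition subst_iter {K : Type} (sigma : K -> seq K) (k : nat) (a : K) : seq K :=
  iter k (subst_word sigma) [:: a].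

(** Generalized substitution. Continuity of a |-> |sigma a| into the discrete
    space nat is written as local constancy; letters are 0-indexed. *)
Definition gen_subst {R : realType} {K : metricType R} (sigma : K -> seq K) : Prop :=
  [/\ (forall a, 0 < size (sigma a))%N,
      (forall a : K, \forall b \near a, size (sigma b) = size (sigma a)) &
      (forall j : nat,
         {within [set a | (j < size (sigma a))%N],
            continuous (fun a => nth a (sigma a) j)})].

Definition primitive {R : realType} {K : metricType R} (sigma : K -> seq K) : Prop :=
  forall V : set K, open V -> V !=set0 ->
    exists j : nat, forall (a : K) (k : nat), (j <= k)%N ->
      exists b, b \in subst_iter sigma k a /\ V b.

(** The language L(sigma): subwords of the sigma^j(a), together with their
    limits in K^n (product topology on K^n, written metrically). *)
Definition language {R : realType} {K : metricType R} (sigma : K -> seq K)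
    (w : seq K) : Prop :=
  forall e : R, 0 < e ->
    exists (j : nat) (a : K) (u : seq K),
      [/\ infix u (subst_iter sigma j a), size u = size w &
          forall i, (i < size w)%N -> ball (nth a w i) e (nth a u i)].

Definition window {K : Type} (z : int -> K) (m : int) (len : nat) : seq K :=
  [seq z (m + i%:Z) | i <- iota 0 len].

Definition subshift {R : realType} {K : metricType R} (sigma : K -> seq K)
    (y : int -> K) : Prop :=
  forall n : nat, language sigma (window y (- n%:Z) (2 * n).+1).

Definition zshift {K : Type} (y : int -> K) : int -> K := fun i => y (i + 1).

(** Starting positions of the blocks tau(y_l) when tau is applied to y with
    the image of y_0 starting at coordinate 0. *)
Definition block_pos {K : Type} (tau : K -> seq K) (y : int -> K) (l : int) : int :=
  match l with
  | Posz n => (\sum_(0 <= t < n) size (tau (y t%:Z)))%:Z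
  | Negz n => - (\sum_(1 <= t < n.+2) size (tau (y (- t%:Z))))%:Z
  end.

Definition subst_seq {K : Type} (tau : K -> seq K) (y z : int -> K) : Prop :=
  forall (l : int) (j : nat), (j < size (tau (y l)))%N ->
    z (block_pos tau y l + j%:Z) = nth (y l) (tau (y l)) j.

Definition concat_of_words {K : Type} (sigma : K -> seq K) (k : nat)
    (z : int -> K) : Prop :=
  exists m : int -> int, (forall l : int, m l < m (l + 1)) /\
    forall l : int, exists a : K,
      window z (m l) (absz (m (l + 1) - m l)%R) = subst_iter sigma k a.

(* Main.v *)
Require Import Defs.
From HB Require Import structures.
From mathcomp Require Import all_boot all_order all_algebra.
From mathcomp Require Import all_classical all_reals all_analysis.
From mathcomp Require Import zify.
Set Implicit Arguments. Unset Strict Implicit. Unset Printing Implicit Defensive.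
Import Order.TTheory GRing.Theory Num.Theory.
Local Open Scope classical_set_scope.
Local Open Scope ring_scope.

Section Words.
Context {R : realType} {K : metricType R}.

Fixpoint wclose (e : R) (u v : seq K) : Prop :=
  match u, v with
  | [::], [::] => True
  | a :: u', b :: v' => ball a e b /\ wclose e u' v'
  | _, _ => False
  end.

Lemma wclose_size e u v : wclose e u v -> size u = size v.
Proof. by elim: u v => [|a u IH] [|b v] //= [_ /IH ->]. Qed.

Lemma wcloseP e u v : wclose e u v <->
  (size u = size v /\ forall i x0 y0, (i < size u)%N -> ball (nth x0 u i) e (nth y0 v i)).
Proof.
elim: u v => [|a u IH] [|b v] //=; split => //.
- by move=> [].
- by move=> [].
- move=> [ab /IH [-> H]]; split => // -[|i] x0 y0 //= Hi; exact: H.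
- move=> [[eq] H]; split; first by have := H 0%N a b isT.
  by apply/IH; split => // i x0 y0 Hi; have := H i.+1 x0 y0 Hi.
Qed.

Lemma wclose_cat e u1 u2 v1 v2 : wclose e u1 v1 -> wclose e u2 v2 ->
  wclose e (u1 ++ u2) (v1 ++ v2).
Proof. by elim: u1 v1 => [|a u IH] [|b v] //= [? /IH H] /H. Qed.

Lemma wclose_le e e' u v : e <= e' -> wclose e u v -> wclose e' u v.
Proof.
move=> ee; elim: u v => [|a u IH] [|b v] //= [ab /IH]; split => //.
exact: le_ball ab.
Qed.

Lemma wclose_trans e1 e2 u v w : wclose e1 u v -> wclose e2 v w -> wclose (e1 + e2) u w.
Proof.
elim: u v w => [|a u IH] [|b v] [|c w] //= [ab uv] [bc vw]; split.
  exact: ball_triangle ab bc.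
exact: IH uv vw.
Qed.

Lemma wclose_refl e u : 0 < e -> wclose e u u.
Proof. by move=> e0; elim: u => //= a u H; split => //; exact: ballxx. Qed.

Lemma wclose_splitl e u1 u2 v : wclose e (u1 ++ u2) v ->
  exists v1 v2, [/\ v = v1 ++ v2, wclose e u1 v1 & wclose e u2 v2].
Proof.
elim: u1 v => [|a u IH] v /=; first by move=> H; exists [::], v.
case: v => // b v [ab /IH [v1 [v2 [-> H1 H2]]]].
by exists (b :: v1), v2.
Qed.

Lemma wclose_infix e s t u : wclose e s t -> infix u s ->
  exists2 u', infix u' t & wclose e u u'.
Proof.
move=> st /infixP [s1 [s2 def]]; move: st; rewrite def.
move=> /wclose_splitl [t1 [t' [-> _ /wclose_splitl [t2 [t3 [-> H _]]]]]].
by exists t2 => //; exact: infix_infix.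
Qed.

Lemma wclose_sym e u v : wclose e u v -> wclose e v u.
Proof.
elim: u v => [|a u IH] [|b v] //= [ab /IH]; split => //; exact: ball_sym.
Qed.

End Words.

Lemma near_all_lt {T : Type} (F : set_system T) {FF : Filter F} (n : nat) (P : nat -> T -> Prop) :
  (forall j, (j < n)%N -> \forall x \near F, P j x) ->
  \forall x \near F, forall j, (j < n)%N -> P j x.
Proof.
elim: n => [|n IH] H; first by apply: filterE => x j.
have H1 := IH (fun j jn => H j (ltnW jn)).
have H2 := H n (ltnSn n).
apply: filterS (filterI H1 H2) => x [A B] j; rewrite ltnS leq_eqVlt.
by case/orP => [/eqP -> //|]; exact: A.
Qed.

Section Subst.
Context {K : Type} (s : K -> seq K).

Lemma sw_cat u v : subst_word s (u ++ v) = subst_word s u ++ subst_word s v.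
Proof. by rewrite /subst_word map_cat flatten_cat. Qed.

Lemma iter_sw_cat k u v : iter k (subst_word s) (u ++ v) =
  iter k (subst_word s) u ++ iter k (subst_word s) v.
Proof. by elim: k => //= k ->; rewrite sw_cat. Qed.

Lemma iter_sw_flatten k w : iter k (subst_word s) w = flatten (map (subst_iter s k) w).
Proof.
elim: w => [|a w IH]; first by elim: k => //= k ->.
by rewrite -cat1s iter_sw_cat IH.
Qed.

Lemma subst_iterD k m a :
  subst_iter s (k + m) a = flatten (map (subst_iter s k) (subst_iter s m a)).
Proof. by rewrite /subst_iter iterD iter_sw_flatten. Qed.

Lemma subst_iterS k a : subst_iter s k.+1 a = subst_word s (subst_iter s k a).
Proof. by []. Qed.

Lemma subst_iter0 a : subst_iter s 0 a = [:: a].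
Proof. by []. Qed.

End Subst.

Lemma infix_flatten {K : eqType} (f : K -> seq K) (w : seq K) b :
  b \in w -> infix (f b) (flatten (map f w)).
Proof.
case/splitPr => w1 w2; rewrite map_cat flatten_cat /= .
exact: infix_infix.
Qed.

Section Cont.
Context {R : realType} {K : metricType R} (sigma : K -> seq K) (Hgs : gen_subst sigma).

Lemma size_subst_iter_gt0 k a : (0 < size (subst_iter sigma k a))%N.
Proof.
case: Hgs => H0 _ _.
elim: k a => // k IH a; rewrite subst_iterS.
case E: (subst_iter sigma k a) (IH a) => [|b w] // _.
by rewrite /subst_word /= size_cat; apply: leq_trans (H0 b) (leq_addr _ _).
Qed.

Lemma letter_near x e : 0 < e -> \forall y \near x, wclose e (sigma x) (sigma y).
Proof.
move=> e0; case: Hgs => _ Hsz Hc.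
have Hl : forall j, (j < size (sigma x))%N ->
    \forall y \near x, ball (nth x (sigma x) j) e (nth y (sigma y) j).
  move=> j jx.
  have oA : open [set a | (j < size (sigma a))%N].
    rewrite openE => a /= ja; rewrite /interior.
    by apply: filterS (Hsz a) => b /= ->.
  have := Hc j; rewrite continuous_open_subspace // => /(_ x).
  rewrite inE => /(_ jx) cx.
  exact: cx _ (nbhsx_ballx _ _ e0).
have := near_all_lt Hl; move: (Hsz x) => H1 H2.
near=> y. have sy : size (sigma y) = size (sigma x) by near: y; exact: H1. have Hy : forall j, (j < size (sigma x))%N -> ball (nth x (sigma x) j) e (nth y (sigma y) j) by near: y; exact: H2. apply/wcloseP; split => // i x0 y0 ix.
by rewrite (set_nth_default x) // (set_nth_default y y0) ?sy //; exact: Hy. Unshelve. all: by end_near. Qed.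

Lemma letter_ball x e : 0 < e ->
  exists2 d, 0 < d & forall y, ball x d y -> wclose e (sigma x) (sigma y).
Proof. by move=> e0; have /nbhs_ballP [d d0 H] := letter_near x e0; exists d. Qed.

Lemma word_ball w e : 0 < e -> exists2 d, 0 < d &
  forall w', wclose d w w' -> wclose e (subst_word sigma w) (subst_word sigma w').
Proof.
move=> e0; elim: w => [|a w [d2 d20 IH]].
  by exists 1 => // -[|b w'].
have [d1 d10 H1] := letter_ball a e0.
exists (Num.min d1 d2); first by rewrite lt_min d10 d20.
case=> // b w' /= [ab ww].
rewrite /subst_word /= -!/(subst_word _ _); apply: wclose_cat.
  by apply: H1; apply: le_ball ab; rewrite ge_min lexx.
by apply: IH; apply: wclose_le ww; rewrite ge_min lexx orbT.
Qed.

Lemma iter_ball k a e : 0 < e -> exists2 d, 0 < d &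
  forall b, ball a d b -> wclose e (subst_iter sigma k a) (subst_iter sigma k b).
Proof.
elim: k e => [|k IH] e e0.
  by exists e => // b ab /=; split.
have [d1 d10 H1] := word_ball (subst_iter sigma k a) e0.
have [d d0 H] := IH d1 d10.
by exists d => // b ab; rewrite !subst_iterS; apply: H1; apply: H.
Qed.

Lemma iter_near k a e : 0 < e ->
  \forall b \near a, wclose e (subst_iter sigma k a) (subst_iter sigma k b).
Proof. by move=> e0; have [d d0 H] := iter_ball k a e0; apply/nbhs_ballP; exists d. Qed.

End Cont.

Lemma compact_decr {T : topologicalType} (C : nat -> set T) : compact [set: T] ->
  (forall n m, (n <= m)%N -> C m `<=` C n) -> (forall n, C n !=set0) ->
  exists p : T, forall n (B : set T), nbhs p B -> C n `&` B !=set0.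
Proof.
move=> cT decr ne.
have FF : Filter (filter_from [set: nat] C).
  apply: filter_from_filter; first by exists 0%N.
  move=> i j _ _; exists (maxn i j) => // x Cx; split.
    by apply: decr (leq_maxl i j) _ Cx.
  by apply: decr (leq_maxr i j) _ Cx.
have PF : ProperFilter (filter_from [set: nat] C).
  by apply: filter_from_proper => i _; exact: ne.
have [p [_ cp]] := cT _ PF (filterT).
exists p => n B nB; apply: cp nB; by exists n.
Qed.

Section Bound.
Context {R : realType} {K : metricType R} (sigma : K -> seq K) (Hgs : gen_subst sigma).

Lemma size_bound k : compact [set: K] ->
  exists M, forall a, (size (subst_iter sigma k a) <= M)%N.
Proof.
move=> cK; apply: contrapT => /forallNP nb.
have ne : forall n, [set a | (n <= size (subst_iter sigma k a))%N] !=set0.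
  move=> n; have /existsNP [a Ha] := nb n; exists a => /=.
  by rewrite ltnW // ltnNge; apply/negP.
have [p Hp] := @compact_decr K _ cK (fun n m nm a Ha => leq_trans nm Ha) ne.
have := Hp (size (subst_iter sigma k p)).+1 _ (iter_near Hgs k p ltr01).
move=> [b [/= Hb /wclose_size Eb]]; by rewrite Eb ltnn in Hb.
Qed.

End Bound.

Section Lang.
Context {R : realType} {K : metricType R} (sigma : K -> seq K).

Lemma lang_wclose w : language sigma w -> forall e, 0 < e ->
  exists j a u, infix u (subst_iter sigma j a) /\ wclose e w u.
Proof.
move=> Hw e e0; have [j [a [u [iu su H]]]] := Hw e e0.
exists j, a, u; split => //; apply/wcloseP; split => // i x0 y0 iw.
by rewrite (set_nth_default a) // (set_nth_default a y0) ?su //; exact: H.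
Qed.

Lemma wclose_lang w : (forall e, 0 < e ->
  exists j a u, infix u (subst_iter sigma j a) /\ wclose e w u) -> language sigma w.
Proof.
move=> H e e0; have [j [a [u [iu /wcloseP [su Hu]]]]] := H e e0.
by exists j, a, u; split => // i iw; exact: Hu.
Qed.

Lemma infix_lang j a u : infix u (subst_iter sigma j a) -> language sigma u.
Proof.
by move=> iu; apply: wclose_lang => e e0; exists j, a, u; split => //; exact: wclose_refl.
Qed.

Lemma lang_close w : (forall e, 0 < e -> exists w', language sigma w' /\ wclose e w w') ->
  language sigma w.
Proof.
move=> H; apply: wclose_lang => e e0.
have e20 : 0 < e / 2 by rewrite divr_gt0.
have [w' [Lw' ww']] := H _ e20.
have [j [a [u [iu wu]]]] := lang_wclose Lw' e20.
exists j, a, u; split => //; rewrite [e]splitr; exact: wclose_trans ww' wu.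
Qed.

Context (Hgs : gen_subst sigma) (Hp : primitive sigma).

Lemma prim_approx j a e m0 : 0 < e -> exists j' a', (m0 <= j')%N /\
  exists2 v, infix v (subst_iter sigma j' a') & wclose e (subst_iter sigma j a) v.
Proof.
move=> e0; have [d d0 Hd] := iter_ball Hgs j a e0.
have oV : open (ball a d)° by exact: open_interior.
have nV : (ball a d)° !=set0 by exists a; exact: nbhsx_ballx.
have [J HJ] := Hp oV nV.
have [b [bin Vb]] := HJ a (maxn J m0) (leq_maxl _ _).
exists (j + maxn J m0)%N, a; split.
  by apply: leq_trans (leq_maxr J m0) (leq_addl _ _).
exists (subst_iter sigma j b); last by apply: Hd; exact: interior_subset.
by rewrite subst_iterD; exact: infix_flatten.
Qed.

Lemma lang_deep w : language sigma w -> forall e m0, 0 < e ->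
  exists j a u, [/\ (m0 <= j)%N, infix u (subst_iter sigma j a) & wclose e w u].
Proof.
move=> Lw e m0 e0.
have e20 : 0 < e / 2 by rewrite divr_gt0.
have [j [a [u [iu wu]]]] := lang_wclose Lw e20.
have [j' [a' [jm [v iv wv]]]] := prim_approx j a m0 e20.
have [u' iu' uu'] := wclose_infix wv iu.
exists j', a', u'; split => //; first exact: infix_trans iu' iv.
rewrite [e]splitr; exact: wclose_trans wu uu'.
Qed.

End Lang.

Section Comb.
Context {K : Type}.

Lemma bp0 (tau : K -> seq K) y : block_pos tau y 0 = 0.
Proof. by rewrite /block_pos /= big_geq. Qed.

Lemma bp_succ (tau : K -> seq K) y l :
  block_pos tau y (l + 1) = block_pos tau y l + (size (tau (y l)))%:Z.
Proof.
case: l => [n|n].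
  have -> : Posz n + 1 = Posz n.+1 by lia.
  rewrite /block_pos big_nat_recr //=.
case: n => [|n].
  have -> : Negz 0 + 1 = Posz 0 by rewrite NegzE; lia.
  rewrite /block_pos big_geq // big_nat1 /=.
  by rewrite addrC subrr.
have -> : Negz n.+1 + 1 = Negz n by rewrite !NegzE; lia.
rewrite /block_pos [in RHS]big_nat_recr //= PoszD opprD -addrA.
by rewrite [X in _ + X]addrC NegzE subrr addr0.
Qed.

Lemma incr_eq (f g : int -> int) : f 0 = g 0 ->
  (forall l, f (l + 1) - f l = g (l + 1) - g l) -> forall l, f l = g l.
Proof.
move=> f0 H.
have H' : forall l, f (l + 1) - g (l + 1) = f l - g l.
  move=> l; have := H l; lia.
have P : forall n : nat, f n - g n = 0.
  elim=> [|n IH]; first by rewrite f0 subrr.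
  have -> : Posz n.+1 = Posz n + 1 by lia.
  by rewrite H'.
have N : forall n : nat, f (- n%:Z) - g (- n%:Z) = 0.
  elim=> [|n IH]; first by rewrite oppr0 f0 subrr.
  have := H' (- (Posz n.+1)); have -> : - (Posz n.+1) + 1 = - (Posz n) by lia.
  lia.
case=> [n|n]; first by have := P n; lia.
by have := N n.+1; rewrite NegzE; lia.
Qed.

Lemma iter_zshift i (w : int -> K) : iter i zshift w = fun p => w (p + i%:Z).
Proof.
elim: i => [|i IH] /=; first by apply: funext => p; rewrite addr0.
by rewrite IH; apply: funext => p; rewrite /zshift -addrA; congr w; lia.
Qed.

Lemma nth_flat x0 (f : K -> seq K) b q j : (q < size b)%N ->
  (j < size (f (nth x0 b q)))%N ->
  nth x0 (flatten (map f b)) ((\sum_(0 <= t < q) size (f (nth x0 b t))) + j)%N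
  = nth x0 (f (nth x0 b q)) j.
Proof.
elim: b q => [|a b IH] [|q] //= qb jq.
  by rewrite big_geq // add0n nth_cat jq.
rewrite big_nat_recl //= nth_cat ltnNge -addnA leq_addr /= addKn.
exact: IH.
Qed.

Lemma size_flat x0 (f : K -> seq K) b :
  size (flatten (map f b)) = (\sum_(0 <= t < size b) size (f (nth x0 b t)))%N.
Proof.
elim: b => [|a b IH] /=; first by rewrite big_geq.
by rewrite size_cat big_nat_recl //= IH.
Qed.

End Comb.

Lemma find_block (g : nat -> nat) n P0 : (P0 < \sum_(0 <= t < n) g t)%N ->
  exists c, [/\ (c < n)%N, (\sum_(0 <= t < c) g t <= P0)%N &
                 (P0 < \sum_(0 <= t < c.+1) g t)%N].
Proof.
elim: n => [|n IH]; first by rewrite big_geq.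
rewrite big_nat_recr //= => H.
case: (ltnP P0 (\sum_(0 <= t < n) g t)) => [/IH [c [cn H1 H2]]|H3].
  by exists c; split => //; exact: ltnW.
by exists n; split => //; rewrite big_nat_recr.
Qed.

Lemma sum_diff_le (g : nat -> nat) M m n : (forall t, (g t <= M)%N) -> (m <= n)%N ->
  (\sum_(0 <= t < n) g t <= \sum_(0 <= t < m) g t + (n - m) * M)%N.
Proof.
move=> gM mn; rewrite (big_cat_nat (leq0n m) mn) leq_add2l.
apply: (@leq_trans (\sum_(m <= t < n) M)%N); first by apply: leq_sum => i _; exact: gM.
by rewrite sum_nat_const_nat.
Qed.

Lemma sum_mono (g : nat -> nat) m n : (m <= n)%N ->
  (\sum_(0 <= t < m) g t <= \sum_(0 <= t < n) g t)%N.
Proof. by move=> mn; rewrite (big_cat_nat (leq0n m) mn) leq_addr. Qed.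

Lemma size_window {K : Type} (y : int -> K) m L : size (window y m L) = L.
Proof. by rewrite /window size_map size_iota. Qed.

Lemma nth_window {K : Type} x0 (y : int -> K) m L t : (t < L)%N ->
  nth x0 (window y m L) t = y (m + t%:Z).
Proof. by move=> tL; rewrite /window (nth_map 0%N) ?size_iota // nth_iota. Qed.

Section Main.
Context {R : realType} {K : metricType R} (sigma : K -> seq K)
  (Hgs : gen_subst sigma) (Hp : primitive sigma) (k : nat) (z : int -> K)
  (Hz : subshift sigma z) (M : nat)
  (HM : forall a, (size (subst_iter sigma k a) <= M)%N).

Let tau := subst_iter sigma k.

Definition eps (N : nat) : R := (N.+1%:R)^-1.

Definition Cset (i N : nat) : set (int -> K) := [set y |
  (forall n', (n' <= N)%N -> language sigma (window y (- n'%:Z) (2 * n').+1)) /\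
  forall l : int, (`|l| <= N)%N -> forall j, (j < size (tau (y l)))%N ->
    ball (z (block_pos tau y l + j%:Z - i%:Z)) (eps N) (nth (y l) (tau (y l)) j)].

Lemma eps_gt0 N : 0 < eps N.
Proof. by rewrite /eps invr_gt0 ltr0n. Qed.

Lemma Cset_ne N : exists i, (i < M)%N /\ Cset i N !=set0.
Proof.
pose N' := (N.+2 * M)%N.
have Lz := Hz N'.
have [j [a [u [jk iu wu]]]] := lang_deep Hgs Hp Lz k (eps_gt0 N).
pose b := subst_iter sigma (j - k) a.
have Eflat : subst_iter sigma j a = flatten (map tau b).
  by rewrite /b /tau -subst_iterD subnKC.
move: iu; rewrite Eflat => /infixP [s1 [s2 Ef]].
pose g t := size (tau (nth a b t)).
pose S n := (\sum_(0 <= t < n) g t)%N.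
have gM : forall t, (g t <= M)%N by move=> t; exact: HM.
have g1 : forall t, (0 < g t)%N by move=> t; exact: size_subst_iter_gt0.
have su : size u = (2 * N').+1 by rewrite -(wclose_size wu) size_window.
have Sb : S (size b) = (size s1 + (2 * N').+1 + size s2)%N.
  by rewrite /S /g -(size_flat a) Ef !size_cat su addnA.
pose P0 := (size s1 + N')%N.
have [c [cb Sc1 Sc2]] : exists c, [/\ (c < size b)%N, (S c <= P0)%N & (P0 < S c.+1)%N].
  apply: find_block; rewrite -/(S _) Sb /P0; lia.
pose i := (P0 - S c)%N.
have F2 : S c.+1 = (S c + g c)%N by rewrite /S big_nat_recr.
have S0 : S 0%N = 0%N by rewrite /S big_geq.
have F1 : (S c <= c * M)%N.
  by have := sum_diff_le gM (leq0n c); rewrite -/(S _) -/(S _) S0 subn0.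
have gcM := gM c.
have hNc : (N < c)%N.
  rewrite ltnNge; apply/negP => cN.
  have : (c * M <= N * M)%N by rewrite leq_mul2r cN orbT.
  rewrite /P0 /N' in Sc2 Sc1 *; lia.
have hsb : (c + N < size b)%N.
  rewrite ltnNge; apply/negP => bN.
  have H1 := sum_diff_le gM cb; rewrite -/(S _) -/(S _) in H1.
  have : ((size b - c.+1) * M <= N * M)%N by rewrite leq_mul2r; apply/orP; right; lia.
  rewrite /P0 /N' in Sc2 Sc1 Sb *; lia.
pose bext (q : int) := match q with Posz q => nth a b q | Negz _ => a end.
pose y (l : int) := bext (c%:Z + l).
have FS : forall m, S m.+1 = (S m + g m)%N by move=> m; rewrite /S big_nat_recr.
exists i; split; first by rewrite /i; lia.
exists y; split.
  move=> n' n'N.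
  have Ew : window y (- n'%:Z) (2 * n').+1 = take (2 * n').+1 (drop (c - n') b).
    apply: (@eq_from_nth _ a).
      by rewrite size_window size_takel // size_drop; lia.
    move=> t; rewrite size_window => tL.
    rewrite nth_window // nth_take // nth_drop /y.
    by have -> : c%:Z + (- n'%:Z + t%:Z) = Posz (c - n' + t)%N by lia.
  rewrite Ew; apply: (@infix_lang _ _ sigma (j - k) a).
  exact: infix_trans (infix_take _ _) (infix_drop _ _).
move=> l lN j0.
have [q Hq] : exists q : nat, c%:Z + l = q%:Z by exists (absz (c%:Z + l)); lia.
have yl : y l = nth a b q by rewrite /y Hq.
have bp : block_pos tau y l = (S q)%:Z - (S c)%:Z.
  pose SS (q : int) : int := match q with
    | Posz m => (S m)%:Z | Negz m => - (m.+1 * size (tau a))%N%:Z end.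
  have SSs : forall q', SS (q' + 1) = SS q' + (size (tau (bext q')))%:Z.
    case=> [m|[|m]].
    - have -> : Posz m + 1 = Posz m.+1 by lia.
      by rewrite /SS FS.
    - have -> : Negz 0 + 1 = 0 by rewrite NegzE; lia.
      by rewrite /SS /= S0 mul1n addrC subrr.
    - have -> : Negz m.+1 + 1 = Negz m by rewrite !NegzE; lia.
      rewrite /SS /bext; set s0 := size (tau a); nia.
  have E0 : block_pos tau y 0 = SS (c%:Z + 0) - SS c%:Z by rewrite bp0 addr0 subrr.
  have Ei : forall l', block_pos tau y (l' + 1) - block_pos tau y l' =
      (SS (c%:Z + (l' + 1)) - SS c%:Z) - (SS (c%:Z + l') - SS c%:Z).
    move=> l'; rewrite bp_succ addrA SSs /y.
    set A := block_pos _ _ _; set B := SS (c%:Z + l'); set C := SS c%:Z; set D := Posz (size _); lia.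
  by rewrite (incr_eq E0 Ei l) Hq.
rewrite yl => j0q.
have qb : (q < size b)%N by lia.
have Hlow : (S c <= S q + N * M)%N.
  case: (leqP q c) => qc; last first.
    by apply: leq_trans (sum_mono g (ltnW qc)) (leq_addr _ _).
  have := sum_diff_le gM qc; rewrite -/(S _) -/(S _) => H.
  apply: leq_trans H _; rewrite leq_add2l leq_mul2r; apply/orP; right; lia.
have Hup : (S q.+1 <= S c.+1 + N * M)%N.
  case: (ltnP q c) => qc.
    by apply: leq_trans (sum_mono g qc) _; rewrite -/(S _) -/(S _) FS -addnA leq_addr.
  have := @sum_diff_le g M c.+1 q.+1 gM qc; rewrite -/(S _) -/(S _) => H.
  apply: leq_trans H _; rewrite leq_add2l leq_mul2r; apply/orP; right; lia.
have gq : (j0 < g q)%N by [].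
have Fq := FS q.
pose pos := (S q + j0)%N.
pose r := (pos + N' - P0)%N.
have rL : (r < (2 * N').+1)%N by rewrite /r /pos /P0 /N' in Sc1 Sc2 F2 Hlow Hup Fq *; lia.
have Pr : (P0 <= pos + N')%N by rewrite /pos /P0 /N' in Sc1 Sc2 F2 Hlow Hup Fq *; lia.
have [_ Hw] := (wcloseP _ _ _).1 wu.
have := Hw r a a; rewrite size_window => /(_ rL).
rewrite nth_window //.
have -> : nth a u r = nth a (tau (nth a b q)) j0.
  have -> : nth a u r = nth a (s1 ++ u ++ s2) (size s1 + r)%N.
    by rewrite nth_cat ltnNge leq_addr /= addKn nth_cat su rL.
  rewrite -Ef; have -> : (size s1 + r = S q + j0)%N by rewrite /r /pos /P0 in Pr *; lia.
  exact: nth_flat.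
rewrite (set_nth_default a (nth a b q)) //.
congr (ball (z _) _ _).
rewrite bp /r /pos /i /P0 in Pr Sc1 *; lia.
Qed.
End Main.

Import ArrowAsProduct.

Section Topo.
Context {R : realType} {K : metricType R}.
Lemma compact_fun : compact [set: K] -> compact [set: int -> K].
Proof.
move=> cK; have := @tychonoff int (fun _ => K) (fun _ => setT) (fun _ => cK).
by congr compact; apply/seteqP; split.
Qed.

Lemma near_proj (y : int -> K) t (B : set K) : nbhs (y t) B -> \forall y' \near y, B (y' t).
Proof. move=> HB; exact: (@proj_continuous int (fun _ => K) t y B HB). Qed.

Lemma metric_eq (x x' : K) : (forall e : R, 0 < e -> ball x e x') -> x = x'.
Proof.
move=> H; apply: mdist_positivity; apply/eqP; rewrite eq_le mdist_ge0 andbT.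
rewrite leNgt; apply/negP => d0; have := H _ d0.
by rewrite ballEmdist /= ltxx.
Qed.
End Topo.

Section Final.
Context {R : realType} {K : metricType R} (sigma : K -> seq K)
  (Hgs : gen_subst sigma) (Hp : primitive sigma) (k : nat) (z : int -> K)
  (Hz : subshift sigma z) (M : nat)
  (HM : forall a, (size (subst_iter sigma k a) <= M)%N).

Let tau := subst_iter sigma k.

Lemma Cset_mono i N N' : (N <= N')%N -> Cset sigma k z i N' `<=` Cset sigma k z i N.
Proof.
move=> NN y [H1 H2]; split.
  by move=> n' n'N; apply: H1; exact: leq_trans n'N NN.
move=> l lN j jl; apply: le_ball (H2 l (leq_trans lN NN) j jl).
by rewrite /eps lef_pV2 ?posrE ?ltr0n // ler_nat.
Qed.

Lemma pigeon : exists i, (i < M)%N /\ forall N, Cset sigma k z i N !=set0.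
Proof.
apply: contrapT => /forallNP H.
have H' : forall i : 'I_M, exists N, ~ (Cset sigma k z i N !=set0).
  move=> i; have := H i; move/not_andP => [/(_ (ltn_ord i))//|/existsNP//].
have [f Hf] := choice H'.
have [i [iM ne]] := Cset_ne Hgs Hp Hz HM (\max_(t < M) f t)%N.
apply: (Hf (Ordinal iM)).
case: ne => y Hy; exists y; apply: Cset_mono Hy.
exact: leq_bigmax.
Qed.

Lemma loc (y : int -> K) (n : nat) (e : R) : 0 < e ->
  \forall y' \near y, forall t : int, - (n.+1)%:Z <= t <= n%:Z ->
    ball (y t) e (y' t) /\ wclose e (tau (y t)) (tau (y' t)).
Proof.
move=> e0.
have aux : forall t0 : int, nbhs (y t0) [set b | ball (y t0) e b /\ wclose e (tau (y t0)) (tau b)].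
  move=> t0; near=> b; split; near: b; first exact: nbhsx_ballx.
  exact: (iter_near Hgs k (y t0) e0).
have H : \forall y' \near y, forall t : nat, (t < n.+1 + n.+1)%N ->
  ball (y (- (n.+1)%:Z + t%:Z)) e (y' (- (n.+1)%:Z + t%:Z)) /\
     wclose e (tau (y (- (n.+1)%:Z + t%:Z))) (tau (y' (- (n.+1)%:Z + t%:Z))).
  apply: (@near_all_lt _ (nbhs y) (nbhs_filter y)) => t _; exact: (near_proj (aux _)).
apply: filterS H => y' Hy' t /andP [t1 t2].
have := Hy' (absz (t + (n.+1)%:Z)) ltac:(lia).
by have -> : - (n.+1)%:Z + (absz (t + (n.+1)%:Z))%:Z = t by lia.
Unshelve. all: by end_near. Qed.

Lemma loc_bp (y y' : int -> K) (n : nat) (e : R) :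
  (forall t : int, - (n.+1)%:Z <= t <= n%:Z ->
    ball (y t) e (y' t) /\ wclose e (tau (y t)) (tau (y' t))) ->
  forall l : int, (`|l| <= n)%N -> block_pos tau y' l = block_pos tau y l.
Proof.
move=> H [d|d] dn /=.
  congr Posz; apply: eq_big_nat => t /andP [_ td].
  by have [_ /wclose_size ->] := H t%:Z ltac:(lia).
congr (- Posz _); apply: eq_big_nat => t /andP [t1 td].
have [_ /wclose_size ->] := H (- t%:Z) ltac:(rewrite NegzE /= in dn; lia).
by [].
Qed.
End Final.

Section Final2.
Context {R : realType} {K : metricType R} (sigma : K -> seq K)
  (Hgs : gen_subst sigma) (Hp : primitive sigma) (k : nat) (z : int -> K)
  (Hz : subshift sigma z) (M : nat)
  (HM : forall a, (size (subst_iter sigma k a) <= M)%N).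

Lemma final_exists : compact [set: K] -> exists (i : nat) (y : int -> K),
  subshift sigma y /\ subst_seq (subst_iter sigma k) y (fun p => z (p - i%:Z)).
Proof.
move=> cK.
have [i [iM Hne]] := pigeon Hgs Hp Hz HM.
have [y Hy] := @compact_decr _ (Cset sigma k z i) (compact_fun cK)
  (fun n m nm => Cset_mono nm) Hne.
exists i, y; split.
  move=> n; apply: lang_close => e e0.
  have [y' [[H1 _] Hb]] := Hy n _ (loc Hgs k y n e0).
  exists (window y' (- n%:Z) (2 * n).+1); split; first exact: H1 n (leqnn n).
  apply/wcloseP; split; first by rewrite !size_window.
  move=> t x0 y0; rewrite size_window => tn; rewrite !nth_window //.
  by apply: (Hb _ _).1; lia.
move=> l j jl /=.
apply: metric_eq => e e0.
have e20 : 0 < e / 2 by rewrite divr_gt0.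
pose N := maxn `|l|%N (Num.truncn (e / 2)^-1).
have eN : eps N <= e / 2.
  rewrite /eps -[e / 2]invrK lef_pV2 ?posrE ?ltr0n ?invr_gt0 //.
  apply: ltW; apply: lt_le_trans (truncnS_gt _) _.
  by rewrite ler_nat ltnS leq_maxr.
have [y' [[_ H2] Hb]] := Hy N _ (loc Hgs k y N e20).
have lN : (`|l| <= N)%N by rewrite leq_maxl.
have bpE := loc_bp Hb lN.
have [_ wl] := Hb l ltac:(lia).
have sz := wclose_size wl.
have := H2 l lN j ltac:(by rewrite -sz); rewrite bpE => Hz1.
have [_ Hw] := (wcloseP _ _ _).1 wl.
have Hz2 := ball_sym (Hw j (y l) (y' l) jl).
have := ball_triangle Hz1 Hz2; apply: le_ball.
by rewrite [e in _ <= e]splitr lerD2r.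
Qed.
End Final2.

Unset Implicit Arguments.

Theorem mainTheorem19 (R : realType) (K : metricType R) (sigma : K -> seq K) :
  alphabet_space K -> gen_subst sigma -> primitive sigma ->
  forall (z : int -> K) (k : nat), subshift sigma z ->
    concat_of_words sigma k z /\
    exists (i : nat) (y w : int -> K),
      [/\ subshift sigma y, subst_seq (subst_iter sigma k) y w &
          z = iter i zshift w].
Proof.
move=> [cK _ _] gs pr z k Hz.
have [M HM] := size_bound gs k cK.
have [i [y [Sy Hs]]] := final_exists gs pr Hz HM cK.
split; last first.
  exists i, y, (fun p => z (p - i%:Z)); split => //.
  by rewrite iter_zshift; apply: funext => p; rewrite addrK.
exists (fun l => block_pos (subst_iter sigma k) y l - i%:Z); split.
  move=> l; rewrite bp_succ; have := size_subst_iter_gt0 gs k (y l); lia.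
move=> l; exists (y l).
rewrite bp_succ.
have -> : absz (block_pos (subst_iter sigma k) y l + (size (subst_iter sigma k (y l)))%:Z - i%:Z
    - (block_pos (subst_iter sigma k) y l - i%:Z))%R = size (subst_iter sigma k (y l)) by lia.
apply: (@eq_from_nth _ (y l)); first by rewrite size_window.
move=> t; rewrite size_window => tl; rewrite nth_window //.
have := Hs l t tl => /= <-; congr z; lia.
Qed.
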